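(* Let $p$ be a prime, $a\ge 1$ an integer, $\tilde\chi$ a Dirichlet character modulo $p^a$, and $b:=\lceil a/3\rceil$. (i) If $p$ is odd, there exists an integer $L$, depending only on $\tilde\chi,p,a,b$ (and not on $x$), such that for all $x\in\mathbb{Z}$, $$\tilde\chi(1+p^b x)=\exp\!\left(\frac{4\pi i\,L\,x}{p^{a-b}}-\frac{2\pi i\,L\,x^2}{p^{a-2b}}\right).$$ (ii) If $p=2$ and $a>3$, there exists an integer $L_1$, depending only on $\tilde\chi$ and $b$ (and not on $x$), such that for all $x\in\mathbb{Z}$, $$\tilde\chi(1+2^b x)=\exp\!\left(\frac{2\pi i\,L_1\,x}{2^{a-b}}-\frac{\pi i\,L_1\,x^2}{2^{a-2b}}\right).$$ (iii) If $p=2$ and $a\le 3$, there exist integers $L_2,L_3$ with $-1\le L_2,L_3\le 2$ such that $\tilde\chi(1+2^b x)=(-1)^{(L_2x+L_3x^2)/2}$ for all $x\in\mathbb{Z}$ (here $L_2x+L_3x^2$ is always even). *)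

(* Defs.v *)
From Stdlib Require Import Reals ZArith Znumtheory.
From Coquelicot Require Import Coquelicot.
Open Scope R_scope.

Definition cis (theta : R) : C := (cos theta, sin theta).

Definition dirichlet_character (q : Z) (chi : Z -> C) : Prop :=
  chi 1%Z = RtoC 1 /\
  (forall m n : Z, chi (m * n)%Z = Cmult (chi m) (chi n)) /\
  (forall n : Z, chi (n + q)%Z = chi n) /\
  (forall n : Z, chi n = RtoC 0 <-> Z.gcd n q <> 1%Z).

Definition ceil3 (a : Z) : Z := ((a + 2) / 3)%Z.

(* Main.v *)
Require Import Defs.
From Stdlib Require Import Reals ZArith Znumtheory Lia Lra.
From Coquelicot Require Import Coquelicot.
Open Scope R_scope.

Fixpoint cpow (w : C) (n : nat) : C :=
  match n with O => RtoC 1 | S n => Cmult w (cpow w n) end.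

Lemma cis_add a b : Cmult (cis a) (cis b) = cis (a + b).
Proof. unfold Cmult, cis; simpl. rewrite cos_plus, sin_plus. f_equal; ring. Qed.

Lemma cis_2PIk k : cis (2 * PI * IZR k) = RtoC 1.
Proof.
  unfold cis, RtoC.
  assert (H : sin (PI * IZR k) = 0) by (apply sin_eq_0_1; exists k; ring).
  replace (2 * PI * IZR k) with (2 * (PI * IZR k)) by ring.
  rewrite cos_2a_sin, sin_2a, H. f_equal; ring.
Qed.

Lemma cis_shift t k : cis (t + 2 * PI * IZR k) = cis t.
Proof. rewrite <- cis_add, cis_2PIk. unfold Cmult, cis, RtoC; simpl; f_equal; ring. Qed.

Lemma cpow_cis t n : cpow (cis t) n = cis (INR n * t).
Proof.
  induction n as [|n IH]; simpl cpow.
  - replace (INR 0 * t) with 0 by (simpl; ring).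
    unfold cis, RtoC. rewrite cos_0, sin_0. reflexivity.
  - rewrite IH, cis_add, S_INR. f_equal; ring.
Qed.

Lemma Cmod_cpow w n : Cmod (cpow w n) = Cmod w ^ n.
Proof. induction n; simpl. apply Cmod_1. rewrite Cmod_mult, IHn. ring. Qed.

Lemma root_unity (w : C) (N : nat) : (1 <= N)%nat -> cpow w N = RtoC 1 ->
  exists k : Z, w = cis (2 * PI * IZR k / INR N).
Proof.
  intros HN Hw.
  assert (Hm : Cmod w = 1).
  { assert (H1 : Cmod w ^ N = 1) by (rewrite <- Cmod_cpow, Hw; apply Cmod_1).
    pose proof (Cmod_ge_0 w) as H0.
    destruct (Rtotal_order (Cmod w) 1) as [Hl|[He|Hg]]; auto.
    - exfalso. assert (Cmod w ^ N < 1) by (apply pow_lt_1_compat; [lra|lia]). lra.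
    - exfalso. assert (1 < Cmod w ^ N) by (apply Rlt_pow_R1; [lra|lia]). lra. }
  destruct w as [x y].
  assert (Hxy : x ^ 2 + y ^ 2 = 1).
  { unfold Cmod in Hm; cbn [fst snd] in Hm.
    rewrite <- (sqrt_sqrt (x^2+y^2)) by nra. rewrite Hm; ring. }
  assert (Hx : -1 <= x <= 1) by nra.
  assert (Hsa : sin (acos x) = Rabs y).
  { rewrite sin_acos by lra. rewrite <- sqrt_Rsqr_abs. f_equal. unfold Rsqr; nra. }
  set (th := if Rle_dec 0 y then acos x else - acos x).
  assert (Hw2 : (x, y) = cis th).
  { unfold cis, th. destruct (Rle_dec 0 y).
    - rewrite cos_acos by lra. rewrite Hsa, Rabs_right by lra. reflexivity.
    - rewrite cos_neg, sin_neg, cos_acos by lra. rewrite Hsa, Rabs_left by lra. f_equal; ring. }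
  rewrite Hw2, cpow_cis in Hw. unfold cis, RtoC in Hw. injection Hw as Hc Hs.
  assert (Hs2 : sin (INR N * th / 2) = 0).
  { assert (E: cos (INR N * th) = 1 - 2 * sin (INR N * th / 2) * sin (INR N * th / 2)).
    { rewrite <- cos_2a_sin. f_equal. field. }
    rewrite Hc in E. nra. }
  destruct (sin_eq_0_0 _ Hs2) as [k Hk].
  exists k. rewrite Hw2. f_equal.
  assert (INR N > 0) by (apply lt_0_INR; lia).
  transitivity (2 * (INR N * th / 2) / INR N). field; lra.
  rewrite Hk. field; lra.
Qed.

Open Scope Z_scope.

Fixpoint eseq (P x1 : Z) (m : nat) : Z :=
  match m with O => 0 | S m => eseq P x1 m + x1 + P * eseq P x1 m * x1 end.

Lemma chi_periodic_mul (Q : Z) (chi : Z -> C) :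
  (forall n, chi (n + Q) = chi n) -> forall n k, chi (n + k * Q) = chi n.
Proof.
  intros H n k.
  assert (Hn : forall (j:nat) n, chi (n + Z.of_nat j * Q) = chi n).
  { induction j; intro m. simpl. rewrite Z.add_0_r. reflexivity.
    rewrite Nat2Z.inj_succ.
    replace (m + Z.succ (Z.of_nat j) * Q) with ((m + Z.of_nat j * Q) + Q) by ring.
    rewrite H. apply IHj. }
  destruct (Z_le_gt_dec 0 k).
  - rewrite <- (Z2Nat.id k) by lia. apply Hn.
  - rewrite <- (Hn (Z.to_nat (-k)) (n + k*Q)). f_equal. rewrite Z2Nat.id by lia. ring.
Qed.

Lemma core (P N : Z) (G : Z -> Z) (x1 : Z) (chi : Z -> C) :
  0 < N ->
  chi 1 = RtoC 1 ->
  (forall m n, chi (m * n) = Cmult (chi m) (chi n)) ->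
  (forall n, chi (n + P * N) = chi n) ->
  (forall x y, (N | G (x + y + P * x * y) - (G x + G y))) ->
  (forall x y, (N | G x - G y) -> (N | x - y)) ->
  (N | G 0) -> (N | G x1 - 1) ->
  exists k : Z, forall x, chi (1 + P * x) = cis (2 * PI * IZR k * IZR (G x) / IZR N).
Proof.
  intros HN H1 Hmul Hper Hhom Hinj H0 Hx1.
  set (w := chi (1 + P * x1)).
  assert (Hchi : forall m, chi (1 + P * eseq P x1 m) = cpow w m).
  { induction m; simpl eseq; simpl cpow.
    - rewrite Z.mul_0_r. exact H1.
    - rewrite <- IHm. unfold w. rewrite <- Hmul. f_equal. ring. }
  assert (HG : forall m, (N | G (eseq P x1 m) - Z.of_nat m)).
  { induction m; simpl eseq.
    - simpl. rewrite Z.sub_0_r. exact H0.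
    - rewrite Nat2Z.inj_succ.
      replace (G (eseq P x1 m + x1 + P * eseq P x1 m * x1) - Z.succ (Z.of_nat m)) with
        ((G (eseq P x1 m + x1 + P * eseq P x1 m * x1) - (G (eseq P x1 m) + G x1))
          + (G (eseq P x1 m) - Z.of_nat m) + (G x1 - 1)) by lia.
      apply Z.divide_add_r; [apply Z.divide_add_r|]; auto. }
  assert (Hcong : forall x y, (N | x - y) -> chi (1 + P * x) = chi (1 + P * y)).
  { intros x y [t Ht]. rewrite <- (chi_periodic_mul (P*N) chi Hper (1 + P*y) t). f_equal.
    replace x with (y + t * N) by lia. ring. }
  assert (HwN : cpow w (Z.to_nat N) = RtoC 1).
  { rewrite <- Hchi. rewrite (Hcong _ 0).
    - replace (1 + P * 0) with 1 by ring. exact H1.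
    - apply Hinj. pose proof (HG (Z.to_nat N)) as HGN. rewrite Z2Nat.id in HGN by lia.
      replace (G (eseq P x1 (Z.to_nat N)) - G 0) with
        ((G (eseq P x1 (Z.to_nat N)) - N) + N - G 0) by lia.
      apply Z.divide_sub_r; [apply Z.divide_add_r|]; auto. apply Z.divide_refl. }
  destruct (root_unity w (Z.to_nat N)) as [k Hk]; [lia | exact HwN |].
  exists k. intro x.
  set (m := Z.to_nat (G x mod N)).
  assert (Hmr : Z.of_nat m = G x mod N) by (unfold m; rewrite Z2Nat.id; [reflexivity | apply Z.mod_pos_bound; lia]).
  pose proof (Z.div_mod (G x) N) as Hdm.
  pose proof (HG m) as HGm. rewrite Hmr in HGm.
  assert (Hm : (N | eseq P x1 m - x)).
  { apply Hinj.
    replace (G (eseq P x1 m) - G x) with ((G (eseq P x1 m) - G x mod N) - N * (G x / N)) by lia.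
    apply Z.divide_sub_r. exact HGm. apply Z.divide_factor_l. }
  rewrite <- (Hcong _ _ Hm), Hchi, Hk, cpow_cis.
  rewrite INR_IZR_INZ, Hmr, INR_IZR_INZ, Z2Nat.id by lia.
  replace (IZR (G x)) with (IZR (N * (G x / N) + G x mod N)) by (f_equal; lia).
  rewrite plus_IZR, mult_IZR.
  assert (HNR : IZR N <> 0%R) by (apply not_0_IZR; lia).
  transitivity (cis (IZR (G x mod N) * (2 * PI * IZR k / IZR N) + 2 * PI * IZR (k * (G x / N)))).
  - rewrite cis_shift. reflexivity.
  - f_equal. rewrite mult_IZR. field. exact HNR.
Qed.

Lemma IZR_powZ (p k : Z) : 0 <= k -> IZR (p ^ k) = powerRZ (IZR p) k.
Proof. intros Hk. destruct k; [reflexivity | apply Zpower_pos_powerRZ | lia]. Qed.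

Lemma pow_divide (p i j : Z) : 0 <= i <= j -> (p ^ i | p ^ j).
Proof. intros H. exists (p ^ (j - i)). rewrite <- Z.pow_add_r by lia. f_equal; lia. Qed.

Open Scope R_scope.

Lemma part_i (p a : Z) (chi : Z -> C) (b : Z) :
  prime p -> (1 <= a)%Z -> dirichlet_character (p ^ a)%Z chi -> b = ((a + 2) / 3)%Z -> p <> 2%Z ->
     exists L : Z, forall x : Z,
       chi (1 + p ^ b * x)%Z =
       cis (4 * PI * IZR L * IZR x / powerRZ (IZR p) (a - b)
            - 2 * PI * IZR L * IZR x ^ 2 / powerRZ (IZR p) (a - 2 * b)).
Proof.
  intros Hp Ha [H1 [Hmul [Hper Hz]]] Hb Hp2.
  pose proof (prime_ge_2 p Hp) as Hp2'.
  assert (Hb1 : (1 <= b /\ b <= a /\ a <= 3*b)%Z).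
  { pose proof (Z.div_mod (a+2) 3 ltac:(lia)). pose proof (Z.mod_pos_bound (a+2) 3 ltac:(lia)). lia. }
  set (P := (p ^ b)%Z). set (N := (p ^ (a - b))%Z).
  assert (HQ : (P * N = p ^ a)%Z) by (unfold P, N; rewrite <- Z.pow_add_r by lia; f_equal; ring).
  assert (HN : (0 < N)%Z) by (apply Z.pow_pos_nonneg; lia).
  assert (HPP : (N | P * P)%Z) by (unfold P, N; rewrite <- Z.pow_add_r by lia; apply pow_divide; lia).
  destruct HPP as [c Hc].
  assert (HPb : P = (p * p ^ (b - 1))%Z).
  { unfold P. rewrite <- (Z.pow_1_r p) at 2. rewrite <- Z.pow_add_r by lia. f_equal; ring. }
  assert (Hnd : forall t, ~ (p | 2 - P * t)%Z).
  { intros t Hd. assert (Hd2 : (p | 2)%Z).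
    { replace 2%Z with ((2 - P*t) + p * (p^(b-1) * t))%Z by (rewrite HPb; ring).
      apply Z.divide_add_r; auto. apply Z.divide_factor_l. }
    apply Z.divide_pos_le in Hd2; lia. }
  assert (Hodd : exists h, (2 * h = P * N + 1)%Z).
  { assert (Hn2 : ~ (2 | P * N)%Z).
    { rewrite HQ. intro Hd. apply Hp2. symmetry.
      apply (Zpow_facts.prime_power_prime 2 p a); auto; [lia | apply prime_2]. }
    exists ((P*N) / 2 + 1)%Z. pose proof (Z.div_mod (P*N) 2). pose proof (Z.mod_pos_bound (P*N) 2).
    assert (((P*N) mod 2 <> 0)%Z) by (intro E; apply Hn2; apply Z.mod_divide; lia).
    lia. }
  destruct Hodd as [h Hh].
  destruct (core P N (fun x => 2*x - P*(x*x))%Z (h + P*(h*h*h))%Z chi HN H1 Hmul) as [k Hk].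
  - intro n. rewrite HQ. apply Hper.
  - intros x y. exists (-2*c*x*y*(x+y) - c*P*x*x*y*y)%Z.
    transitivity ((P*P) * (-2*x*y*(x+y) - P*x*x*y*y))%Z. ring. rewrite Hc. ring.
  - intros x y Hd.
    assert (Hr : rel_prime N (2 - P*(x+y))).
    { unfold N. apply rel_prime_sym. apply Zpow_facts.rel_prime_Zpower_r. lia.
      apply rel_prime_sym. apply prime_rel_prime; auto. }
    apply (Gauss N (2 - P*(x+y))); auto.
    replace ((2 - P*(x+y)) * (x - y))%Z with (2*x - P*(x*x) - (2*y - P*(y*y)))%Z by ring. exact Hd.
  - exists 0%Z. ring.
  - cbv beta. exists (P + P*P*h*h - 2*c*h^4 - c*P*h^6)%Z.
    transitivity ((2*h - 1 - P*N)*(1+P*h*h) + (P*P - c*N)*(-2*h^4 - P*h^6)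
                  + (P + P*P*h*h - 2*c*h^4 - c*P*h^6)*N)%Z. ring.
    replace (2*h - 1 - P*N)%Z with 0%Z by lia. replace (P*P - c*N)%Z with 0%Z by lia. ring.
  - exists k. intro x. rewrite (Hk x). f_equal.
    unfold N, P. rewrite minus_IZR, !mult_IZR, !IZR_powZ by lia.
    assert (Hp0 : IZR p <> 0) by (apply not_0_IZR; lia).
    assert (E : powerRZ (IZR p) (a - b) = powerRZ (IZR p) (a - 2*b) * powerRZ (IZR p) b)
      by (rewrite <- powerRZ_add; [f_equal; ring | exact Hp0]).
    rewrite E. pose proof (powerRZ_NOR _ (a - 2*b) Hp0). pose proof (powerRZ_NOR _ b Hp0).
    field. split; auto.
Qed.

Lemma part_ii (a : Z) (chi : Z -> C) (b : Z) :
  (a > 3)%Z -> dirichlet_character (2 ^ a)%Z chi -> b = ((a + 2) / 3)%Z ->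
     exists L1 : Z, forall x : Z,
       chi (1 + 2 ^ b * x)%Z =
       cis (2 * PI * IZR L1 * IZR x / powerRZ 2 (a - b)
            - PI * IZR L1 * IZR x ^ 2 / powerRZ 2 (a - 2 * b)).
Proof.
  intros Ha [H1 [Hmul [Hper Hz]]] Hb.
  assert (Hb1 : (2 <= b /\ b <= a /\ a <= 3*b)%Z).
  { pose proof (Z.div_mod (a+2) 3 ltac:(lia)). pose proof (Z.mod_pos_bound (a+2) 3 ltac:(lia)). lia. }
  set (P := (2 ^ b)%Z). set (N := (2 ^ (a - b))%Z). set (S2 := (2 ^ (b - 1))%Z).
  assert (HQ : (P * N = 2 ^ a)%Z) by (unfold P, N; rewrite <- Z.pow_add_r by lia; f_equal; ring).
  assert (HN : (0 < N)%Z) by (apply Z.pow_pos_nonneg; lia).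
  assert (HPP : (N | P * P)%Z) by (unfold P, N; rewrite <- Z.pow_add_r by lia; apply pow_divide; lia).
  destruct HPP as [c Hc].
  assert (HPS : P = (2 * S2)%Z).
  { unfold P, S2. rewrite <- (Z.pow_1_r 2) at 2. rewrite <- Z.pow_add_r by lia. f_equal; ring. }
  assert (HS2 : S2 = (2 * 2 ^ (b - 2))%Z).
  { unfold S2. rewrite <- (Z.pow_1_r 2) at 2. rewrite <- Z.pow_add_r by lia. f_equal; ring. }
  assert (HS4 : (N | S2*S2*S2*S2)%Z).
  { unfold S2, N. rewrite <- !Z.pow_add_r by lia. apply pow_divide; lia. }
  destruct HS4 as [d Hd].
  destruct (core P N (fun x => x - S2*(x*x))%Z (1 + S2 + 2*S2*S2 + 5*S2*S2*S2)%Z chi HN H1 Hmul) as [k Hk].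
  - intro n. rewrite HQ. apply Hper.
  - intros x y. exists (-c*x*y*(x+y) - c*S2*x*x*y*y)%Z.
    transitivity ((P*P) * (-x*y*(x+y) - S2*x*x*y*y))%Z. rewrite HPS. ring. rewrite Hc. ring.
  - intros x y Hdv.
    assert (Hnd : ~ (2 | 1 - S2*(x+y))%Z).
    { intro Hd2. assert (Hd1 : (2 | 1)%Z).
      { replace 1%Z with ((1 - S2*(x+y)) + 2 * (2^(b-2) * (x+y)))%Z by (rewrite HS2; ring).
        apply Z.divide_add_r; auto. apply Z.divide_factor_l. }
      apply Z.divide_pos_le in Hd1; lia. }
    assert (Hr : rel_prime N (1 - S2*(x+y))).
    { unfold N. apply rel_prime_sym. apply Zpow_facts.rel_prime_Zpower_r. lia.
      apply rel_prime_sym. apply prime_rel_prime; auto. apply prime_2. }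
    apply (Gauss N (1 - S2*(x+y))); auto.
    replace ((1 - S2*(x+y)) * (x - y))%Z with (x - S2*(x*x) - (y - S2*(y*y)))%Z by ring. exact Hdv.
  - exists 0%Z. ring.
  - cbv beta. exists (-d*(14 + 14*S2 + 20*S2*S2 + 25*S2*S2*S2))%Z.
    transitivity ((S2*S2*S2*S2) * (-(14 + 14*S2 + 20*S2*S2 + 25*S2*S2*S2)))%Z. ring.
    rewrite Hd. ring.
  - exists k. intro x. rewrite (Hk x). f_equal.
    unfold N, S2. rewrite minus_IZR, !mult_IZR, !IZR_powZ by lia.
    assert (Hp0 : IZR 2 <> 0) by (apply not_0_IZR; lia).
    assert (E : powerRZ 2 (a - b) = powerRZ 2 (a - 2*b) * powerRZ 2 (b - 1) * powerRZ 2 1)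
      by (rewrite <- !powerRZ_add; [f_equal; ring | exact Hp0 | exact Hp0]).
    rewrite E. pose proof (powerRZ_NOR _ (a - 2*b) Hp0). pose proof (powerRZ_NOR _ (b-1) Hp0).
    simpl (powerRZ 2 1).
    field. split; auto.
Qed.

Lemma pm1_nat (k : nat) : (-1) ^ k = 1 \/ (-1) ^ k = -1.
Proof. induction k; simpl. left; reflexivity. destruct IHk as [H|H]; rewrite H; [right|left]; ring. Qed.

Lemma pm1 (n : Z) : powerRZ (-1) n = 1 \/ powerRZ (-1) n = -1.
Proof.
  destruct n; simpl.
  - left; reflexivity.
  - apply pm1_nat.
  - destruct (pm1_nat (Pos.to_nat p)) as [H|H]; rewrite H; [left|right]; field.
Qed.

Lemma powerRZ_m1_shift (K T : Z) : powerRZ (-1) (K + 2*T)%Z = powerRZ (-1) K.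
Proof.
  assert (H0 : -1 <> 0) by lra.
  rewrite powerRZ_add by exact H0.
  replace (2*T)%Z with (T+T)%Z by ring. rewrite powerRZ_add by exact H0.
  destruct (pm1 T) as [H|H]; rewrite H; ring.
Qed.

Lemma iii_gen (chi : Z -> C) (L2 L3 : Z) :
  (forall n k, chi (n + k*8)%Z = chi n) ->
  (forall r, (0 <= r < 4)%Z -> exists K0, (L2*r + L3*r^2 = 2*K0)%Z /\ chi (1+2*r)%Z = RtoC (powerRZ (-1) K0)) ->
  forall x, Z.Even (L2*x + L3*x^2)%Z /\ chi (1 + 2*x)%Z = RtoC (powerRZ (-1) ((L2*x + L3*x^2)/2)%Z).
Proof.
  intros Hp H x.
  pose proof (Z.div_mod x 4 ltac:(lia)) as Hx. pose proof (Z.mod_pos_bound x 4 ltac:(lia)) as Hr.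
  remember (x / 4)%Z as q. remember (x mod 4)%Z as r.
  destruct (H r) as [K0 [HK Hc]]; [lia|].
  assert (E : (L2*x + L3*x^2 = 2*(K0 + 2*(L2*q + L3*(4*q*q+2*q*r))))%Z).
  { rewrite Hx. transitivity ((L2*r + L3*r^2) + 4*(L2*q + L3*(4*q*q+2*q*r)))%Z. ring. rewrite HK. ring. }
  split. { exists (K0 + 2*(L2*q + L3*(4*q*q+2*q*r)))%Z; exact E. }
  rewrite E, (Z.mul_comm 2 (K0 + _)), Z.div_mul by lia. rewrite powerRZ_m1_shift. rewrite <- Hc.
  rewrite Hx. rewrite <- (Hp (1 + 2*r)%Z q). f_equal. ring.
Qed.

Lemma sq1 (z : C) : Cmult z z = RtoC 1 -> z = RtoC 1 \/ z = RtoC (-1).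
Proof.
  destruct z as [u v]. unfold Cmult, RtoC; cbn [fst snd]. intros H. injection H as H1 H2.
  destruct (Req_dec v 0) as [Hv|Hv].
  - subst v. assert (u = 1 \/ u = -1) as [ -> | -> ] by nra; [left|right]; reflexivity.
  - exfalso. assert (u = 0) by nra. subst u. nra.
Qed.

Ltac chiv chi := match goal with |- context [chi (1 + 2 * ?r)%Z] =>
  let v := eval compute in (1 + 2*r)%Z in replace (1 + 2*r)%Z with v by reflexivity end.

Lemma part_iii (a : Z) (chi : Z -> C) (b : Z) :
  (1 <= a)%Z -> (a <= 3)%Z -> dirichlet_character (2 ^ a)%Z chi -> b = ((a + 2) / 3)%Z ->
     exists L2 L3 : Z,
       (-1 <= L2 <= 2)%Z /\ (-1 <= L3 <= 2)%Z /\
       forall x : Z,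
         Z.Even (L2 * x + L3 * x ^ 2)%Z /\
         chi (1 + 2 ^ b * x)%Z =
         RtoC (powerRZ (-1) ((L2 * x + L3 * x ^ 2) / 2)%Z).
Proof.
  intros Ha1 Ha3 [H1 [Hmul [Hper Hz]]] Hb.
  assert (b = 1)%Z.
  { pose proof (Z.div_mod (a+2) 3 ltac:(lia)). pose proof (Z.mod_pos_bound (a+2) 3 ltac:(lia)). lia. }
  rewrite H. change (2^1)%Z with 2%Z.
  assert (Hp8 : forall n k, chi (n + k*8)%Z = chi n).
  { intros n k. assert (exists d, 8 = d * 2^a)%Z as [d Hd].
    { assert (a = 1 \/ a = 2 \/ a = 3)%Z as [ -> | [ -> | -> ] ] by lia; [exists 4%Z|exists 2%Z|exists 1%Z]; reflexivity. }
    rewrite Hd, Z.mul_assoc. apply chi_periodic_mul. exact Hper. }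
  assert (H3 : chi 3%Z = RtoC 1 \/ chi 3%Z = RtoC (-1)).
  { apply sq1. rewrite <- Hmul. change (3*3)%Z with (1 + 1*8)%Z. rewrite Hp8. exact H1. }
  assert (H5 : chi 5%Z = RtoC 1 \/ chi 5%Z = RtoC (-1)).
  { apply sq1. rewrite <- Hmul. change (5*5)%Z with (1 + 3*8)%Z. rewrite Hp8. exact H1. }
  assert (H7 : chi 7%Z = Cmult (chi 3%Z) (chi 5%Z)).
  { rewrite <- Hmul. change (3*5)%Z with (7 + 1*8)%Z. rewrite Hp8. reflexivity. }

  destruct H3 as [H3|H3]; destruct H5 as [H5|H5].
  - exists 0%Z, 0%Z. split; [lia|split;[lia|]]. apply iii_gen; [exact Hp8|].
    intros r Hr. exists ((0*r + 0*r^2)/2)%Z.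
    assert (r = 0 \/ r = 1 \/ r = 2 \/ r = 3)%Z as [ -> | [ -> | [ -> | -> ] ]] by lia;
    (split; [reflexivity|]); chiv chi; try rewrite H7; try rewrite H3; try rewrite H5; try rewrite H1;
    try rewrite H7; unfold Cmult, RtoC; cbn [fst snd]; f_equal; simpl; ring.
  - exists (-1)%Z, 1%Z. split; [lia|split;[lia|]]. apply iii_gen; [exact Hp8|].
    intros r Hr. exists ((-1*r + 1*r^2)/2)%Z.
    assert (r = 0 \/ r = 1 \/ r = 2 \/ r = 3)%Z as [ -> | [ -> | [ -> | -> ] ]] by lia;
    (split; [reflexivity|]); chiv chi; try rewrite H7; try rewrite H3; try rewrite H5; try rewrite H1;
    try rewrite H7; unfold Cmult, RtoC; cbn [fst snd]; f_equal; simpl; ring.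
  - exists 2%Z, 0%Z. split; [lia|split;[lia|]]. apply iii_gen; [exact Hp8|].
    intros r Hr. exists ((2*r + 0*r^2)/2)%Z.
    assert (r = 0 \/ r = 1 \/ r = 2 \/ r = 3)%Z as [ -> | [ -> | [ -> | -> ] ]] by lia;
    (split; [reflexivity|]); chiv chi; try rewrite H7; try rewrite H3; try rewrite H5; try rewrite H1;
    try rewrite H7; unfold Cmult, RtoC; cbn [fst snd]; f_equal; simpl; ring.
  - exists 1%Z, 1%Z. split; [lia|split;[lia|]]. apply iii_gen; [exact Hp8|].
    intros r Hr. exists ((1*r + 1*r^2)/2)%Z.
    assert (r = 0 \/ r = 1 \/ r = 2 \/ r = 3)%Z as [ -> | [ -> | [ -> | -> ] ]] by lia;
    (split; [reflexivity|]); chiv chi; try rewrite H7; try rewrite H3; try rewrite H5; try rewrite H1;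
    try rewrite H7; unfold Cmult, RtoC; cbn [fst snd]; f_equal; simpl; ring.
Qed.

Theorem lemma2 (p a : Z) (chi : Z -> C) :
  prime p -> (1 <= a)%Z -> dirichlet_character (p ^ a)%Z chi ->
  let b := ceil3 a in
  (* (i) *)
  ((p <> 2%Z) ->
     exists L : Z, forall x : Z,
       chi (1 + p ^ b * x)%Z =
       cis (4 * PI * IZR L * IZR x / powerRZ (IZR p) (a - b)
            - 2 * PI * IZR L * IZR x ^ 2 / powerRZ (IZR p) (a - 2 * b))) /\
  (* (ii) *)
  (p = 2%Z -> (a > 3)%Z ->
     exists L1 : Z, forall x : Z,
       chi (1 + 2 ^ b * x)%Z =
       cis (2 * PI * IZR L1 * IZR x / powerRZ 2 (a - b)
            - PI * IZR L1 * IZR x ^ 2 / powerRZ 2 (a - 2 * b))) /\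
  (* (iii) *)
  (p = 2%Z -> (a <= 3)%Z ->
     exists L2 L3 : Z,
       (-1 <= L2 <= 2)%Z /\ (-1 <= L3 <= 2)%Z /\
       forall x : Z,
         Z.Even (L2 * x + L3 * x ^ 2)%Z /\
         chi (1 + 2 ^ b * x)%Z =
         RtoC (powerRZ (-1) ((L2 * x + L3 * x ^ 2) / 2)%Z)).
Proof.
  intros Hp Ha Hchi b.
  assert (Hb : b = ((a + 2) / 3)%Z) by reflexivity. clearbody b.
  split; [|split].
  - intro Hp2. exact (part_i p a chi b Hp Ha Hchi Hb Hp2).
  - intros -> Ha3. exact (part_ii a chi b Ha3 Hchi Hb).
  - intros -> Ha3. exact (part_iii a chi b Ha Ha3 Hchi Hb).
Qed.
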